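(* Let $r=\langle L\leftarrow K\rightarrow R\rangle$ be a rule over $\mathcal L$ and let $g:L\to G$ be an injective graph morphism. Then there exist graphs $D,H$ and morphisms $K\to D$, $D\to G$, $R\to H$, $D\to H$ such that both squares of the diagram $$\begin{array}{ccccc} L & \leftarrow & K & \rightarrow & R\\ \downarrow g & & \downarrow & & \downarrow\\ G & \leftarrow & D & \rightarrow & H\end{array}$$ commute and are natural pushouts (a natural double pushout) if and only if $g$ satisfies the dangling condition. In this case $D$ and $H$ are unique up to isomorphism, and for a TLRG $G$ they coincide (up to isomorphism) with the intermediate graph and result graph of the rule application construction. Moreover, if $G\Rightarrow_r H$, then $G$ is a TLRG if and only if $H$ is a TLRG.
   Context: Fix a label alphabet $\mathcal L=(\mathcal L_V,\mathcal L_E)$ of finite sets. A graph over $\mathcal L$ is a tuple $G=(V,E,s,t,l,m,p)$ where $V,E$ are finite sets, $s,t:E\to V$ are total (source and target), $l:V\rightharpoonup\mathcal L_V$ is a partial node labelling, $m:E\to\mathcal L_E$ is a total edge labelling, and $p:V\rightharpoonup\{0,1\}$ is a partial rootedness function ($1$ = root, $0$ = non-root). $G$ is a TLRG (totally labelled, totally rooted graph) if $l$ and $p$ are total. A morphism $g:G\to H$ is a pair $(g_V:V_G\to V_H,g_E:E_G\to E_H)$ with $g_V\circ s_G=s_H\circ g_E$, $g_V\circ t_G=t_H\circ g_E$, $m_H\circ g_E=m_G$, $l_H(g_V(v))=l_G(v)$ whenever $l_G(v)$ is defined, and $p_H(g_V(v))=p_G(v)$ whenever $p_G(v)$ is defined.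 Graphs and morphisms form a category; pushouts and pullbacks are taken there, and a natural pushout is a commuting square that is both a pushout and a pullback. A morphism is injective if both components are injective; an isomorphism is a bijective morphism whose inverse is a morphism. A rule $r=\langle L\leftarrow K\rightarrow R\rangle$ consists of TLRGs $L,R$ and a graph $K$ that is a subgraph of both $L$ and $R$ (i.e. $V_K\subseteq V_L$, $E_K\subseteq E_L$, $s_K,t_K,m_K$ are restrictions of $s_L,t_L,m_L$, and $l_K\subseteq l_L$, $p_K\subseteq p_L$ as sets of pairs; likewise for $R$), the two arrows being the inclusions. An injective morphism $g:L\to G$ satisfies the dangling condition if no edge of $G$ not in $g(L)$ is incident to a node in $g(V_L\setminus V_K)$. Applying $r$ to a TLRG $G$ via such $g$: (1) delete from $G$ the images of the nodes and edges of $L$ not in $K$, and for each node $v$ of $K$ whose label (resp. rootedness) is undefined, make the label (resp. rootedness) of $g_V(v)$ undefined, giving the intermediate graph $D$; (2) add disjointly the nodes and edges of $R$ not in $K$ with their labels and rootedness (edges attached via $g$ on nodes of $K$), and for each node $v$ of $K$ with undefined label (resp. rootedness), set the label (resp. rootedness) of $g_V(v)$ to $l_R(v)$ (resp. $p_R(v)$), giving the result graph $H$. One writes $G\Rightarrow_{r,g}M$ or $G\Rightarrow_r M$ if $M\cong H$ for such a match $g$ satisfying the dangling condition. *)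

(* Defs.v *)
From HB Require Import structures.
From mathcomp Require Import all_boot.
Set Implicit Arguments. Unset Strict Implicit. Unset Printing Implicit Defensive.

Section Graphs.
Variables (LV LE : finType).

Record graph := Graph {
  gnode : finType;
  gedge : finType;
  gsrc : gedge -> gnode;
  gtgt : gedge -> gnode;
  glab : gnode -> option LV;
  gmark : gedge -> LE;
  groot : gnode -> option bool }.

Definition TLRG (G : graph) :=
  forall v : gnode G, glab v <> None /\ groot v <> None.

Record morph (G H : graph) := Morph {
  mV : gnode G -> gnode H;
  mE : gedge G -> gedge H;
  morph_src : forall e, mV (gsrc e) = gsrc (mE e);
  morph_tgt : forall e, mV (gtgt e) = gtgt (mE e);
  morph_mark : forall e, gmark (mE e) = gmark e;
  morph_lab : forall v a, glab v = Some a -> glab (mV v) = Some a;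
  morph_root : forall v b, groot v = Some b -> groot (mV v) = Some b }.

Definition inj_morph G H (f : morph G H) := injective (mV f) /\ injective (mE f).

Definition tri X Y Z (u : morph Y Z) (f : morph X Y) (x : morph X Z) :=
  (forall v, mV u (mV f v) = mV x v) /\ (forall e, mE u (mE f e) = mE x e).

Definition meq X Y (u u' : morph X Y) :=
  (forall v, mV u v = mV u' v) /\ (forall e, mE u e = mE u' e).

Definition sq_comm A B C D (b : morph A B) (c : morph A C)
  (f : morph B D) (h : morph C D) :=
  (forall v, mV f (mV b v) = mV h (mV c v)) /\
  (forall e, mE f (mE b e) = mE h (mE c e)).

Definition is_pushout A B C D (b : morph A B) (c : morph A C)
  (f : morph B D) (h : morph C D) :=
  sq_comm b c f h /\
  forall (X : graph) (x1 : morph B X) (x2 : morph C X), sq_comm b c x1 x2 ->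
    exists u : morph D X, (tri u f x1 /\ tri u h x2) /\
      forall u' : morph D X, tri u' f x1 -> tri u' h x2 -> meq u u'.

Definition is_pullback A B C D (b : morph A B) (c : morph A C)
  (f : morph B D) (h : morph C D) :=
  sq_comm b c f h /\
  forall (X : graph) (y1 : morph X B) (y2 : morph X C), sq_comm y1 y2 f h ->
    exists u : morph X A, (tri b u y1 /\ tri c u y2) /\
      forall u' : morph X A, tri b u' y1 -> tri c u' y2 -> meq u u'.

Definition is_natural_pushout A B C D (b : morph A B) (c : morph A C)
  (f : morph B D) (h : morph C D) :=
  is_pushout b c f h /\ is_pullback b c f h.

Definition iso (G H : graph) :=
  exists (f : morph G H) (f' : morph H G),
    cancel (mV f) (mV f') /\ cancel (mV f') (mV f) /\
    cancel (mE f) (mE f') /\ cancel (mE f') (mE f).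

(* A rule <L <- K -> R>: L, R TLRGs, K a subgraph of both; the inclusions are
   represented by injective morphisms b1 : K -> L, b2 : K -> R. *)
Definition is_rule K L R (b1 : morph K L) (b2 : morph K R) :=
  TLRG L /\ TLRG R /\ inj_morph b1 /\ inj_morph b2.

Definition dangling K L G (b1 : morph K L) (g : morph L G) :=
  forall e : gedge G, e \notin codom (mE g) ->
    forall x : gnode L, x \notin codom (mV b1) ->
      gsrc e <> mV g x /\ gtgt e <> mV g x.

Definition natural_dpo K L R G D H (b1 : morph K L) (b2 : morph K R)
  (g : morph L G) (k : morph K D) (d : morph D G) (h : morph R H)
  (d' : morph D H) :=
  is_natural_pushout b1 k g d /\ is_natural_pushout b2 k h d'.

Section Construction.
Variables (K L R G : graph) (b1 : morph K L) (b2 : morph K R) (g : morph L G).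

Definition delV (v : gnode G) : bool :=
  [exists x : gnode L, (x \notin codom (mV b1)) && (mV g x == v)].
Definition delE (e : gedge G) : bool :=
  [exists y : gedge L, (y \notin codom (mE b1)) && (mE g y == e)].
(* under the dangling condition the last two conjuncts are implied by the first *)
Definition keepE (e : gedge G) : bool :=
  [&& ~~ delE e, ~~ delV (gsrc e) & ~~ delV (gtgt e)].

Definition VD := {v : gnode G | ~~ delV v}.
Definition ED := {e : gedge G | keepE e}.

Lemma keepE_src e : keepE e -> ~~ delV (gsrc e). Proof. by case/and3P. Qed.
Lemma keepE_tgt e : keepE e -> ~~ delV (gtgt e). Proof. by case/and3P. Qed.

Definition srcD (e : ED) : VD := exist _ (gsrc (val e)) (keepE_src (valP e)).
Definition tgtD (e : ED) : VD := exist _ (gtgt (val e)) (keepE_tgt (valP e)).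
Definition labD (v : VD) : option LV :=
  if [exists k : gnode K, (mV g (mV b1 k) == val v) && (glab k == None)]
  then None else glab (val v).
Definition rootD (v : VD) : option bool :=
  if [exists k : gnode K, (mV g (mV b1 k) == val v) && (groot k == None)]
  then None else groot (val v).
Definition markD (e : ED) : LE := gmark (val e).

Definition interm : graph := @Graph VD ED srcD tgtD labD markD rootD.

Definition VRn := {x : gnode R | x \notin codom (mV b2)}.
Definition ERn := {y : gedge R | y \notin codom (mE b2)}.
Definition VH := (VD + VRn)%type.
Definition EH := (ED + ERn)%type.

Lemma keep_K (ginj : injective (mV g)) k : ~~ delV (mV g (mV b1 k)).
Proof.
apply/existsP => -[x /andP [Hx /eqP Hg]].
by move: Hx; rewrite (ginj _ _ Hg) codom_f.
Qed.

Variable ginj : injective (mV g).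

Definition kD (k : gnode K) : VD := exist _ (mV g (mV b1 k)) (keep_K ginj k).

Definition hR (x : gnode R) : VH :=
  (if x \in codom (mV b2) as c return (x \in codom (mV b2) = c -> VH)
   then fun h => inl (kD (iinv h))
   else fun h => inr (exist _ x (negbT h))) (erefl _).

Definition srcH (e : EH) : VH :=
  match e with inl e => inl (srcD e) | inr y => hR (gsrc (val y)) end.
Definition tgtH (e : EH) : VH :=
  match e with inl e => inl (tgtD e) | inr y => hR (gtgt (val y)) end.
Definition labH (v : VH) : option LV :=
  match v with
  | inl v => if [pick k | (mV g (mV b1 k) == val v) && (glab k == None)] is Some k
             then glab (mV b2 k) else labD v
  | inr x => glab (val x)
  end.
Definition rootH (v : VH) : option bool :=
  match v with
  | inl v => if [pick k | (mV g (mV b1 k) == val v) && (groot k == None)] is Some k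
             then groot (mV b2 k) else rootD v
  | inr x => groot (val x)
  end.
Definition markH (e : EH) : LE :=
  match e with inl e => markD e | inr y => gmark (val y) end.

Definition result : graph := @Graph VH EH srcH tgtH labH markH rootH.

End Construction.
End Graphs.

(* Main.v *)
Require Import Defs.
From HB Require Import structures.
From mathcomp Require Import all_boot.
Set Implicit Arguments. Unset Strict Implicit. Unset Printing Implicit Defensive.

Lemma dif_spec (b : bool) (Y : Type) (f : b = true -> Y) (f' : b = false -> Y)
  (P : Y -> Prop) : (forall H, P (f H)) -> (forall H, P (f' H)) ->
  P ((if b as c return b = c -> Y then f else f') (erefl b)).
Proof. by case: b f f'. Qed.

Section Basics.
Variables (LV LE : finType).
Local Notation graph := (graph LV LE).

Definition idm (A : graph) : morph A A :=
  @Morph _ _ A A id id (fun _ => erefl) (fun _ => erefl) (fun _ => erefl)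
    (fun _ _ h => h) (fun _ _ h => h).

Definition comp (A B C : graph) (v : morph B C) (u : morph A B) : morph A C.
Proof.
refine (@Morph _ _ A C (fun x => mV v (mV u x)) (fun x => mE v (mE u x)) _ _ _ _ _).
- by move=> e; rewrite !morph_src.
- by move=> e; rewrite !morph_tgt.
- by move=> e; rewrite !morph_mark.
- by move=> x a H; apply: morph_lab; apply: morph_lab.
- by move=> x a H; apply: morph_root; apply: morph_root.
Defined.

Lemma iso_sym (A B : graph) : iso A B -> iso B A.
Proof. by case=> f [f' [h1 [h2 [h3 h4]]]]; exists f', f. Qed.

Lemma iso_trans (A B C : graph) : iso A B -> iso B C -> iso A C.
Proof.
case=> f [f' [h1 [h2 [h3 h4]]]] [u [u' [k1 [k2 [k3 k4]]]]].
exists (comp u f), (comp f' u'); rewrite /=; split; last split; last split.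
- by move=> x; rewrite k1 h1.
- by move=> x; rewrite h2 k2.
- by move=> x; rewrite k3 h3.
- by move=> x; rewrite h4 k4.
Qed.

Lemma iso_TLRG (A B : graph) : iso A B -> TLRG A -> TLRG B.
Proof.
case=> f [f' [h1 [h2 _]]] TA z; have [la ra] := TA (mV f' z).
split.
- case E: (glab (mV f' z)) la => [a|] // _.
  by have := morph_lab f E; rewrite h2 => ->.
- case E: (groot (mV f' z)) ra => [a|] // _.
  by have := morph_root f E; rewrite h2 => ->.
Qed.

Section IsoBij.
Variables (A B : graph) (f : morph A B).
Hypotheses (iV : injective (mV f)) (iE : injective (mE f))
  (sV : forall y, y \in codom (mV f)) (sE : forall y, y \in codom (mE f))
  (lf : forall x, glab (mV f x) = glab x) (rf : forall x, groot (mV f x) = groot x).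

Definition fiV y := iinv (sV y).
Definition fiE y := iinv (sE y).
Lemma fiVK : cancel (mV f) fiV. Proof. by move=> x; rewrite /fiV iinv_f. Qed.
Lemma fiEK : cancel (mE f) fiE. Proof. by move=> x; rewrite /fiE iinv_f. Qed.
Lemma fiVK' : cancel fiV (mV f). Proof. by move=> x; rewrite /fiV f_iinv. Qed.
Lemma fiEK' : cancel fiE (mE f). Proof. by move=> x; rewrite /fiE f_iinv. Qed.

Definition finv : morph B A.
Proof.
refine (@Morph _ _ B A fiV fiE _ _ _ _ _).
- by move=> e; apply: iV; rewrite morph_src !fiVK' fiEK'.
- by move=> e; apply: iV; rewrite morph_tgt !fiVK' fiEK'.
- by move=> e; rewrite -{2}(fiEK' e) morph_mark.
- by move=> x a H; rewrite -lf fiVK'.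
- by move=> x a H; rewrite -rf fiVK'.
Defined.

Lemma iso_of_bij : iso A B.
Proof.
exists f, finv; split; [exact: fiVK|split; [exact: fiVK'|split; [exact: fiEK|exact: fiEK']]].
Qed.
End IsoBij.

End Basics.
Section PO.
Variables (LV LE : finType).
Local Notation graph := (graph LV LE).
Variables (A B C D : graph) (b : morph A B) (c : morph A C) (f : morph B D) (h : morph C D).
Hypotheses (bV : injective (mV b)) (bE : injective (mE b)).
Hypothesis PO : is_pushout b c f h.

Definition x1V (y : gnode B) : gnode C + gnode B :=
  if [pick a | mV b a == y] is Some a then inl (mV c a) else inr y.
Definition x1E (y : gedge B) : gedge C + gedge B :=
  if [pick a | mE b a == y] is Some a then inl (mE c a) else inr y.

Lemma x1V_b a : x1V (mV b a) = inl (mV c a).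
Proof. rewrite /x1V; case: pickP => [a' /eqP /bV -> //|/(_ a)]; by rewrite eqxx. Qed.
Lemma x1E_b a : x1E (mE b a) = inl (mE c a).
Proof. rewrite /x1E; case: pickP => [a' /eqP /bE -> //|/(_ a)]; by rewrite eqxx. Qed.
Lemma x1V_n y : y \notin codom (mV b) -> x1V y = inr y.
Proof. rewrite /x1V; case: pickP => // a /eqP <-; by rewrite codom_f. Qed.
Lemma x1E_n y : y \notin codom (mE b) -> x1E y = inr y.
Proof. rewrite /x1E; case: pickP => // a /eqP <-; by rewrite codom_f. Qed.
Lemma x1V_inl y u : x1V y = inl u -> exists a, mV b a = y /\ mV c a = u.
Proof. rewrite /x1V; case: pickP => // a /eqP <- [<-]; by exists a. Qed.
Lemma x1E_inl y u : x1E y = inl u -> exists a, mE b a = y /\ mE c a = u.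
Proof. rewrite /x1E; case: pickP => // a /eqP <- [<-]; by exists a. Qed.
Lemma x1V_inr y u : x1V y = inr u -> u = y.
Proof. by rewrite /x1V; case: pickP => // _ [<-]. Qed.
Lemma x1E_inr y u : x1E y = inr u -> u = y.
Proof. by rewrite /x1E; case: pickP => // _ [<-]. Qed.

Definition XV := (gnode C + gnode B)%type.
Definition XE := (gedge C + gedge B)%type.
Definition srcX (e : XE) : XV :=
  match e with inl e => inl (gsrc e) | inr e => x1V (gsrc e) end.
Definition tgtX (e : XE) : XV :=
  match e with inl e => inl (gtgt e) | inr e => x1V (gtgt e) end.
Definition labX (v : XV) : option LV :=
  match v with inl u => if u \in codom (mV c) then glab (mV h u) else glab u
             | inr y => glab y end.
Definition rootX (v : XV) : option bool :=
  match v with inl u => if u \in codom (mV c) then groot (mV h u) else groot u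
             | inr y => groot y end.
Definition markX (e : XE) : LE :=
  match e with inl e => gmark e | inr e => gmark e end.
Definition Xg : graph := @Graph LV LE XV XE srcX tgtX labX markX rootX.

Definition x1 : morph B Xg.
Proof.
refine (@Morph _ _ B Xg x1V x1E _ _ _ _ _).
- move=> e; case: (boolP (e \in codom (mE b))) => [/codomP [a ->]|He].
  + by rewrite x1E_b /= -!morph_src x1V_b.
  + by rewrite x1E_n.
- move=> e; case: (boolP (e \in codom (mE b))) => [/codomP [a ->]|He].
  + by rewrite x1E_b /= -!morph_tgt x1V_b.
  + by rewrite x1E_n.
- move=> e; case: (boolP (e \in codom (mE b))) => [/codomP [a ->]|He].
  + by rewrite x1E_b /= !morph_mark.
  + by rewrite x1E_n.
- move=> y z Hy; case: (boolP (y \in codom (mV b))) => [/codomP [a Ha]|Hn].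
  + rewrite Ha x1V_b /= codom_f -(proj1 (proj1 PO)) -Ha.
    exact: morph_lab.
  + by rewrite x1V_n.
- move=> y z Hy; case: (boolP (y \in codom (mV b))) => [/codomP [a Ha]|Hn].
  + rewrite Ha x1V_b /= codom_f -(proj1 (proj1 PO)) -Ha.
    exact: morph_root.
  + by rewrite x1V_n.
Defined.

Definition x2 : morph C Xg.
Proof.
refine (@Morph _ _ C Xg inl inl _ _ _ _ _) => //.
- move=> u z Hu /=; case: ifP => // _; exact: morph_lab.
- move=> u z Hu /=; case: ifP => // _; exact: morph_root.
Defined.

Definition vV (x : XV) : gnode D := match x with inl u => mV h u | inr y => mV f y end.
Definition vE (x : XE) : gedge D := match x with inl u => mE h u | inr y => mE f y end.

Lemma vV_x1 y : vV (x1V y) = mV f y.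
Proof.
case: (boolP (y \in codom (mV b))) => [/codomP [a ->]|Hn].
- by rewrite x1V_b /= (proj1 (proj1 PO)).
- by rewrite x1V_n.
Qed.
Lemma vE_x1 y : vE (x1E y) = mE f y.
Proof.
case: (boolP (y \in codom (mE b))) => [/codomP [a ->]|Hn].
- by rewrite x1E_b /= (proj2 (proj1 PO)).
- by rewrite x1E_n.
Qed.

Definition vm : morph Xg D.
Proof.
refine (@Morph _ _ Xg D vV vE _ _ _ _ _).
- by case=> e /=; rewrite ?vV_x1 morph_src.
- by case=> e /=; rewrite ?vV_x1 morph_tgt.
- by case=> e /=; rewrite morph_mark.
- case=> [u|y] z /=; last exact: morph_lab.
  case: ifP => // _ H; exact: morph_lab.
- case=> [u|y] z /=; last exact: morph_root.
  case: ifP => // _ H; exact: morph_root.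
Defined.

Lemma sq_x : sq_comm b c x1 x2.
Proof. by split => a /=; rewrite ?x1V_b ?x1E_b. Qed.

Lemma med : exists m : morph D Xg, tri m f x1 /\ tri m h x2.
Proof. by have [m [Hm _]] := proj2 PO _ _ _ sq_x; exists m. Qed.

Lemma med_props : exists m : morph D Xg, tri m f x1 /\ tri m h x2 /\
  (forall w, vV (mV m w) = w) /\ (forall e, vE (mE m e) = e).
Proof.
have [m [[t1 t2] _]] := proj2 PO _ _ _ sq_x.
have [u0 [_ U]] := proj2 PO _ _ _ (proj1 PO).
have t1' : tri (comp vm m) f f.
  by split=> y /=; [rewrite (proj1 t1) vV_x1 | rewrite (proj2 t1) vE_x1].
have t2' : tri (comp vm m) h h.
  by split=> y /=; [rewrite (proj1 t2) | rewrite (proj2 t2)].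
have ti1 : tri (idm D) f f by [].
have ti2 : tri (idm D) h h by [].
have [U1 U2] := U _ t1' t2'; have [I1 I2] := U _ ti1 ti2.
exists m; split; [by []|split; [by []|split]].
- by move=> w; have := U1 w; rewrite I1 /=.
- by move=> w; have := U2 w; rewrite I2 /=.
Qed.

Lemma PO_injV : injective (mV h).
Proof.
have [m [_ [[t1 _] _]]] := med_props => u1 u2 E.
by have := t1 u1; rewrite E t1 /= => -[].
Qed.
Lemma PO_injE : injective (mE h).
Proof.
have [m [_ [[_ t1] _]]] := med_props => u1 u2 E.
by have := t1 u1; rewrite E t1 /= => -[].
Qed.

Lemma PO_pbV y u : mV f y = mV h u -> exists a, mV b a = y /\ mV c a = u.
Proof.
have [m [[s1 _] [[t1 _] _]]] := med_props => E.
apply: x1V_inl; rewrite -[x1V y]/(mV x1 y) -s1 E t1 //.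
Qed.
Lemma PO_pbE y u : mE f y = mE h u -> exists a, mE b a = y /\ mE c a = u.
Proof.
have [m [[_ s1] [[_ t1] _]]] := med_props => E.
apply: x1E_inl; rewrite -[x1E y]/(mE x1 y) -s1 E t1 //.
Qed.

Lemma PO_surjV w : (exists y, mV f y = w) \/ (exists u, mV h u = w).
Proof.
have [m [_ [_ [S _]]]] := med_props.
have := S w; case: (mV m w) => [u|y] /= <-; [right|left]; by eexists.
Qed.
Lemma PO_surjE w : (exists y, mE f y = w) \/ (exists u, mE h u = w).
Proof.
have [m [_ [_ [_ S]]]] := med_props.
have := S w; case: (mE m w) => [u|y] /= <-; [right|left]; by eexists.
Qed.

Lemma PO_lab u : u \notin codom (mV c) -> glab (mV h u) = glab u.
Proof.
have [m [_ [[t1 _] _]]] := med_props => Hn.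
case E1: (glab u) => [z|]; first exact: morph_lab.
case E2: (glab (mV h u)) => [z|] //.
by have := morph_lab m E2; rewrite t1 /= (negbTE Hn) E1.
Qed.
Lemma PO_root u : u \notin codom (mV c) -> groot (mV h u) = groot u.
Proof.
have [m [_ [[t1 _] _]]] := med_props => Hn.
case E1: (groot u) => [z|]; first exact: morph_root.
case E2: (groot (mV h u)) => [z|] //.
by have := morph_root m E2; rewrite t1 /= (negbTE Hn) E1.
Qed.

Lemma PO_finjV : injective (mV c) -> injective (mV f).
Proof.
have [m [[s1 _] _]] := med_props => cinj y1 y2 E.
have : x1V y1 = x1V y2 by rewrite -[x1V y1]/(mV x1 y1) -[x1V y2]/(mV x1 y2) -!s1 E.
case: (boolP (y1 \in codom (mV b))) => [/codomP [a1 ->]|H1];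
case: (boolP (y2 \in codom (mV b))) => [/codomP [a2 ->]|H2];
rewrite ?x1V_b ?x1V_n //; by case=> // /cinj ->.
Qed.
Lemma PO_finjE : injective (mE c) -> injective (mE f).
Proof.
have [m [[_ s1] _]] := med_props => cinj y1 y2 E.
have : x1E y1 = x1E y2 by rewrite -[x1E y1]/(mE x1 y1) -[x1E y2]/(mE x1 y2) -!s1 E.
case: (boolP (y1 \in codom (mE b))) => [/codomP [a1 ->]|H1];
case: (boolP (y2 \in codom (mE b))) => [/codomP [a2 ->]|H2];
rewrite ?x1E_b ?x1E_n //; by case=> // /cinj ->.
Qed.
End PO.
Section Pt.
Variables (LV LE : finType).
Local Notation graph := (graph LV LE).
Definition ptg (l0 : option LV) (r0 : option bool) : graph :=
  @Graph LV LE unit void (@of_void _) (@of_void _)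
    (fun _ => l0) (@of_void _) (fun _ => r0).

Definition ptm (l0 : option LV) (r0 : option bool) (Y : graph) (y : gnode Y)
  (Hl : forall a, l0 = Some a -> glab y = Some a)
  (Hr : forall a, r0 = Some a -> groot y = Some a) : morph (ptg l0 r0) Y :=
  @Morph _ _ (ptg l0 r0) Y (fun _ => y) (@of_void _) (fun e => match e with end)
    (fun e => match e with end) (fun e => match e with end) (fun _ => Hl) (fun _ => Hr).

Variables (A B C D : graph) (b : morph A B) (c : morph A C) (f : morph B D) (h : morph C D).
Hypothesis PB : is_pullback b c f h.

Lemma PB_lab y u z : mV f y = mV h u -> glab y = Some z -> glab u = Some z ->
  exists a, mV b a = y /\ glab a = Some z.
Proof.
move=> E Hy Hu.
pose y1 := @ptm (Some z) None B y (fun a H => etrans Hy H) (fun a (H : None = Some a) => match H with end).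
pose y2 := @ptm (Some z) None C u (fun a H => etrans Hu H) (fun a (H : None = Some a) => match H with end).
have sq : sq_comm y1 y2 f h by split => // [[]].
have [m [[[t1 _] _] _]] := proj2 PB _ _ _ sq.
exists (mV m tt); split; first exact: (t1 tt).
exact: (morph_lab m (v := tt)).
Qed.

Lemma PB_root y u z : mV f y = mV h u -> groot y = Some z -> groot u = Some z ->
  exists a, mV b a = y /\ groot a = Some z.
Proof.
move=> E Hy Hu.
pose y1 := @ptm None (Some z) B y (fun a (H : None = Some a) => match H with end) (fun a H => etrans Hy H).
pose y2 := @ptm None (Some z) C u (fun a (H : None = Some a) => match H with end) (fun a H => etrans Hu H).
have sq : sq_comm y1 y2 f h by split => // [[]].
have [m [[[t1 _] _] _]] := proj2 PB _ _ _ sq.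
exists (mV m tt); split; first exact: (t1 tt).
exact: (morph_root m (v := tt)).
Qed.
End Pt.
Section Main.
Variables (LV LE : finType).
Local Notation graph := (graph LV LE).
Variables (K L R G : graph) (b1 : morph K L) (b2 : morph K R) (g : morph L G).
Hypotheses (TL : TLRG L) (TR : TLRG R).
Hypotheses (b1V : injective (mV b1)) (b1E : injective (mE b1))
  (b2V : injective (mV b2)) (b2E : injective (mE b2))
  (gV : injective (mV g)) (gE : injective (mE g)).

Lemma exK_iff (w : gnode G) (a : gnode K) (P : pred (gnode K)) :
  mV g (mV b1 a) = w ->
  [exists k, (mV g (mV b1 k) == w) && P k] = P a.
Proof.
move=> <-; apply/existsP/idP => [[k /andP [/eqP /gV /b1V -> //]]|Pa].
by exists a; rewrite eqxx.
Qed.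

Lemma exK_n (w : gnode G) (P : pred (gnode K)) :
  (forall a, mV g (mV b1 a) <> w) ->
  [exists k, (mV g (mV b1 k) == w) && P k] = false.
Proof.
by move=> Hn; apply/existsP => -[k /andP [/eqP /Hn]].
Qed.

Lemma pickK_iff (w : gnode G) (a : gnode K) (P : pred (gnode K)) :
  mV g (mV b1 a) = w ->
  [pick k | (mV g (mV b1 k) == w) && P k] = if P a then Some a else None.
Proof.
move=> Ew; case: pickP => [k /andP [/eqP E Pk]|N].
- by move: E Pk; rewrite -Ew => /gV /b1V ->  ->.
- by case: ifP => // Pa; have := N a; rewrite Ew eqxx Pa.
Qed.

Lemma pickK_n (w : gnode G) (P : pred (gnode K)) :
  (forall a, mV g (mV b1 a) <> w) ->
  [pick k | (mV g (mV b1 k) == w) && P k] = None.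
Proof.
by move=> Hn; case: pickP => // k /andP [/eqP /Hn].
Qed.

Lemma hR_in a : hR b1 b2 gV (mV b2 a) = inl (kD b1 gV a).
Proof.
rewrite /hR; apply: (dif_spec (P := fun y => y = _)) => Hc.
- by congr inl; apply/val_inj; rewrite /= iinv_f.
- by exfalso; rewrite codom_f in Hc.
Qed.

Lemma hR_out x (Hx : x \notin codom (mV b2)) :
  hR b1 b2 gV x = inr (exist _ x Hx : VRn b2).
Proof.
rewrite /hR; apply: (dif_spec (P := fun y => y = _)) => Hc.
- by exfalso; rewrite Hc in Hx.
- by congr inr; apply/val_inj.
Qed.

Section Given.
Variables (D H : graph) (k : morph K D) (d : morph D G) (h : morph R H) (d' : morph D H).
Hypothesis ND : natural_dpo b1 b2 g k d h d'.

Let POL : is_pushout b1 k g d := proj1 (proj1 ND).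
Let PBL : is_pullback b1 k g d := proj2 (proj1 ND).
Let POR : is_pushout b2 k h d' := proj1 (proj2 ND).

Lemma commL v : mV g (mV b1 v) = mV d (mV k v). Proof. exact: (proj1 (proj1 POL)). Qed.
Lemma commLE v : mE g (mE b1 v) = mE d (mE k v). Proof. exact: (proj2 (proj1 POL)). Qed.
Lemma commR v : mV h (mV b2 v) = mV d' (mV k v). Proof. exact: (proj1 (proj1 POR)). Qed.
Lemma commRE v : mE h (mE b2 v) = mE d' (mE k v). Proof. exact: (proj2 (proj1 POR)). Qed.

Lemma dV : injective (mV d). Proof. exact: PO_injV b1V b1E POL. Qed.
Lemma dE : injective (mE d). Proof. exact: PO_injE b1V b1E POL. Qed.
Lemma d'V : injective (mV d'). Proof. exact: PO_injV b2V b2E POR. Qed.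
Lemma d'E : injective (mE d'). Proof. exact: PO_injE b2V b2E POR. Qed.
Lemma kV : injective (mV k).
Proof. by move=> x y E; apply/b1V/gV; rewrite !commL E. Qed.
Lemma kE : injective (mE k).
Proof. by move=> x y E; apply/b1E/gE; rewrite !commLE E. Qed.
Lemma hV : injective (mV h). Proof. exact: PO_finjV b2V b2E POR kV. Qed.
Lemma hE : injective (mE h). Proof. exact: PO_finjE b2V b2E POR kE. Qed.

Lemma ND_dangling : dangling b1 g.
Proof.
move=> e He x Hx.
have [[y Ey]|[u Eu]] := PO_surjE b1V b1E POL e; first by move: He; rewrite -Ey codom_f.
suff S : forall z, z = mV d (gsrc u) \/ z = mV d (gtgt u) -> z <> mV g x.
  by rewrite -Eu -morph_src -morph_tgt; split; apply: S; [left|right].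
move=> z Hz E; have [w Ew] : exists w, mV g x = mV d w.
  by case: Hz => Hz; [exists (gsrc u)|exists (gtgt u)]; rewrite -E Hz.
have [a [Ea _]] := PO_pbV b1V b1E POL Ew.
by move: Hx; rewrite -Ea codom_f.
Qed.

Lemma Dlab_k v : glab (mV k v) = glab v.
Proof.
case E: (glab v) => [c|]; first exact: morph_lab.
case E2: (glab (mV k v)) => [z|] //.
have [c Lc] : exists c, glab (mV b1 v) = Some c by case: (glab (mV b1 v)) (proj1 (TL (mV b1 v))) => [c|] //; exists c.
have := morph_lab g Lc; rewrite commL (morph_lab d E2) => -[cz]; subst c.
have [a [Ea La]] := PB_lab PBL (commL v) Lc E2.
by move: La; rewrite (b1V Ea) E.
Qed.

Lemma Droot_k v : groot (mV k v) = groot v.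
Proof.
case E: (groot v) => [c|]; first exact: morph_root.
case E2: (groot (mV k v)) => [z|] //.
have [c Lc] : exists c, groot (mV b1 v) = Some c by case: (groot (mV b1 v)) (proj2 (TL (mV b1 v))) => [c|] //; exists c.
have := morph_root g Lc; rewrite commL (morph_root d E2) => -[cz]; subst c.
have [a [Ea La]] := PB_root PBL (commL v) Lc E2.
by move: La; rewrite (b1V Ea) E.
Qed.

Lemma notdel_d u : ~~ delV b1 g (mV d u).
Proof.
apply/existsP => -[x /andP [Hx /eqP E]].
have [a [Ea _]] := PO_pbV b1V b1E POL E.
by move: Hx; rewrite -Ea codom_f.
Qed.

Lemma keep_d e : keepE b1 g (mE d e).
Proof.
rewrite /keepE -morph_src -morph_tgt !notdel_d !andbT /delE.
apply/existsP => -[x /andP [Hx /eqP E]].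
have [a [Ea _]] := PO_pbE b1V b1E POL E.
by move: Hx; rewrite -Ea codom_f.
Qed.

Lemma memV (w : VD b1 g) : val w \in codom (mV d).
Proof.
have [[y Ey]|[u <-]] := PO_surjV b1V b1E POL (val w); last exact: codom_f.
case: (boolP (y \in codom (mV b1))) => [/codomP [a Ea]|Hn].
- by rewrite -Ey Ea commL codom_f.
- have := valP w; move/negP => []; apply/existsP; exists y; by rewrite Hn Ey eqxx.
Qed.

Lemma memE (e : ED b1 g) : val e \in codom (mE d).
Proof.
have [[y Ey]|[u <-]] := PO_surjE b1V b1E POL (val e); last exact: codom_f.
case: (boolP (y \in codom (mE b1))) => [/codomP [a Ea]|Hn].
- by rewrite -Ey Ea commLE codom_f.
- have := valP e; case/and3P => He0 _ _; move/negP: He0 => He0; exfalso; apply: He0; apply/existsP; exists y; by rewrite Hn -Ey eqxx.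
Qed.

Definition psiV (w : VD b1 g) : gnode D := iinv (memV w).
Definition psiE (e : ED b1 g) : gedge D := iinv (memE e).
Lemma psiVK w : mV d (psiV w) = val w. Proof. exact: f_iinv. Qed.
Lemma psiEK e : mE d (psiE e) = val e. Proof. exact: f_iinv. Qed.

Lemma psi_lab w : glab (psiV w) = labD w.
Proof.
rewrite /labD; case: (boolP (psiV w \in codom (mV k))) => [/codomP [a Ea]|Hn].
- have Ew : mV g (mV b1 a) = val w by rewrite commL -Ea psiVK.
  rewrite (exK_iff _ Ew) Ea Dlab_k.
  case E: (glab a) => [c|] //=; rewrite -Ew; symmetry; apply: morph_lab; exact: morph_lab.
- rewrite exK_n; first by rewrite -psiVK (PO_lab b1V b1E POL).
  move=> a Ea; move: Hn; rewrite -(dV (_ : mV d (mV k a) = mV d (psiV w))) ?codom_f //.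
  by rewrite psiVK -commL.
Qed.

Lemma psi_root w : groot (psiV w) = rootD w.
Proof.
rewrite /rootD; case: (boolP (psiV w \in codom (mV k))) => [/codomP [a Ea]|Hn].
- have Ew : mV g (mV b1 a) = val w by rewrite commL -Ea psiVK.
  rewrite (exK_iff _ Ew) Ea Droot_k.
  case E: (groot a) => [c|] //=; rewrite -Ew; symmetry; apply: morph_root; exact: morph_root.
- rewrite exK_n; first by rewrite -psiVK (PO_root b1V b1E POL).
  move=> a Ea; move: Hn; rewrite -(dV (_ : mV d (mV k a) = mV d (psiV w))) ?codom_f //.
  by rewrite psiVK -commL.
Qed.

Definition psi : morph (interm b1 g) D.
Proof.
refine (@Morph _ _ (interm b1 g) D psiV psiE _ _ _ _ _).
- by move=> e; apply: dV; rewrite morph_src !psiVK psiEK.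
- by move=> e; apply: dV; rewrite morph_tgt !psiVK psiEK.
- by move=> e; rewrite -(morph_mark d) psiEK.
- by move=> x a; rewrite psi_lab.
- by move=> x a; rewrite psi_root.
Defined.

Lemma iso_D : iso (interm b1 g) D.
Proof.
apply: (@iso_of_bij _ _ _ _ psi).
- by move=> x y E; apply/val_inj; rewrite -!psiVK; congr (mV d _); exact: E.
- by move=> x y E; apply/val_inj; rewrite -!psiEK; congr (mE d _); exact: E.
- move=> u; have E : mV d (psiV (exist _ (mV d u) (notdel_d u) : VD b1 g)) = mV d u by rewrite psiVK.
  by rewrite -(dV E) codom_f.
- move=> u; have E : mE d (psiE (exist _ (mE d u) (keep_d u) : ED b1 g)) = mE d u by rewrite psiEK.
  by rewrite -(dE E) codom_f.
- exact: psi_lab.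
- exact: psi_root.
Qed.
Lemma psiV_inj : injective psiV.
Proof. by move=> x y E; apply/val_inj; rewrite -!psiVK E. Qed.
Lemma psiE_inj : injective psiE.
Proof. by move=> x y E; apply/val_inj; rewrite -!psiEK E. Qed.

Lemma psi_kD a : psiV (kD b1 gV a) = mV k a.
Proof. by apply: dV; rewrite psiVK -commL. Qed.

Lemma psi_d u : psiV (exist _ (mV d u) (notdel_d u) : VD b1 g) = u.
Proof. by apply: dV; rewrite psiVK. Qed.
Lemma psiE_d u : psiE (exist _ (mE d u) (keep_d u) : ED b1 g) = u.
Proof. by apply: dE; rewrite psiEK. Qed.

Lemma Hlab_h x : glab (mV h x) = glab x.
Proof.
case E: (glab x) (proj1 (TR x)) => [c|] // _; exact: morph_lab.
Qed.
Lemma Hroot_h x : groot (mV h x) = groot x.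
Proof.
case E: (groot x) (proj2 (TR x)) => [c|] // _; exact: morph_root.
Qed.

Definition chiV (s : VH b1 b2 g) : gnode H :=
  match s with inl w => mV d' (psiV w) | inr x => mV h (val x) end.
Definition chiE (s : EH b1 b2 g) : gedge H :=
  match s with inl e => mE d' (psiE e) | inr y => mE h (val y) end.

Lemma chi_hR x : chiV (hR b1 b2 gV x) = mV h x.
Proof.
case: (boolP (x \in codom (mV b2))) => [/codomP [a ->]|Hx].
- by rewrite hR_in /= psi_kD commR.
- by rewrite (hR_out Hx).
Qed.

Lemma chi_lab s : glab (chiV s) = labH s.
Proof.
case: s => [w|x] /=; last exact: Hlab_h.
case: (boolP (psiV w \in codom (mV k))) => [/codomP [a Ea]|Hn].
- have Ew : mV g (mV b1 a) = val w by rewrite commL -Ea psiVK.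
  rewrite (pickK_iff _ Ew) Ea -commR Hlab_h.
  case E: (glab a) => [c|] /=; last by [].
  rewrite -psi_lab Ea Dlab_k E; exact: morph_lab.
- rewrite pickK_n; first by rewrite -psi_lab (PO_lab b2V b2E POR).
  move=> a Ea; move: Hn; rewrite -(dV (_ : mV d (mV k a) = mV d (psiV w))) ?codom_f //.
  by rewrite psiVK -commL.
Qed.

Lemma chi_root s : groot (chiV s) = rootH s.
Proof.
case: s => [w|x] /=; last exact: Hroot_h.
case: (boolP (psiV w \in codom (mV k))) => [/codomP [a Ea]|Hn].
- have Ew : mV g (mV b1 a) = val w by rewrite commL -Ea psiVK.
  rewrite (pickK_iff _ Ew) Ea -commR Hroot_h.
  case E: (groot a) => [c|] /=; last by [].
  rewrite -psi_root Ea Droot_k E; exact: morph_root.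
- rewrite pickK_n; first by rewrite -psi_root (PO_root b2V b2E POR).
  move=> a Ea; move: Hn; rewrite -(dV (_ : mV d (mV k a) = mV d (psiV w))) ?codom_f //.
  by rewrite psiVK -commL.
Qed.

Definition chi : morph (result b1 b2 gV) H.
Proof.
refine (@Morph _ _ (result b1 b2 gV) H chiV chiE _ _ _ _ _).
- case=> [e|y] /=; last by rewrite chi_hR morph_src.
  by rewrite -morph_src; congr (mV d' _); apply: (morph_src psi).
- case=> [e|y] /=; last by rewrite chi_hR morph_tgt.
  by rewrite -morph_tgt; congr (mV d' _); apply: (morph_tgt psi).
- case=> [e|y] /=; last exact: morph_mark.
  by rewrite morph_mark; apply: (morph_mark psi).
- by move=> x a; rewrite chi_lab.
- by move=> x a; rewrite chi_root.
Defined.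

Lemma iso_H : iso (result b1 b2 gV) H.
Proof.
apply: (@iso_of_bij _ _ _ _ chi).
- case=> [w1|x1] [w2|x2] /= E.
  + by rewrite (psiV_inj (d'V E)).
  + have [a [Ea _]] := PO_pbV b2V b2E POR (esym E).
    by move: (proj2_sig x2); rewrite -Ea codom_f.
  + have [a [Ea _]] := PO_pbV b2V b2E POR E.
    by move: (proj2_sig x1); rewrite -Ea codom_f.
  + by rewrite (val_inj (hV E)).
- case=> [w1|x1] [w2|x2] /= E.
  + by rewrite (psiE_inj (d'E E)).
  + have [a [Ea _]] := PO_pbE b2V b2E POR (esym E).
    by move: (proj2_sig x2); rewrite -Ea codom_f.
  + have [a [Ea _]] := PO_pbE b2V b2E POR E.
    by move: (proj2_sig x1); rewrite -Ea codom_f.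
  + by rewrite (val_inj (hE E)).
- have Hd : forall u, mV d' u \in codom chiV.
    move=> u; have <- : chiV (inl (exist _ (mV d u) (notdel_d u))) = mV d' u by rewrite /= psi_d.
    exact: codom_f.
  move=> z; have [[y <-]|[u <-]] := PO_surjV b2V b2E POR z; last exact: Hd.
  case: (boolP (y \in codom (mV b2))) => [/codomP [a ->]|Hy]; first by rewrite commR.
  by have <- : chiV (inr (exist _ y Hy)) = mV h y by []; exact: codom_f.
- have Hd : forall u, mE d' u \in codom chiE.
    move=> u; have <- : chiE (inl (exist _ (mE d u) (keep_d u))) = mE d' u by rewrite /= psiE_d.
    exact: codom_f.
  move=> z; have [[y <-]|[u <-]] := PO_surjE b2V b2E POR z; last exact: Hd.
  case: (boolP (y \in codom (mE b2))) => [/codomP [a ->]|Hy]; first by rewrite commRE.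
  by have <- : chiE (inr (exist _ y Hy)) = mE h y by []; exact: codom_f.
- exact: chi_lab.
- exact: chi_root.
Qed.

End Given.
Section Constr.
Hypothesis Hdang : dangling b1 g.

Lemma keepK_E a : keepE b1 g (mE g (mE b1 a)).
Proof.
rewrite /keepE -!morph_src -!morph_tgt !(keep_K b1 gV) !andbT /delE.
apply/existsP => -[y /andP [Hy /eqP /gE E]].
by move: Hy; rewrite E codom_f.
Qed.

Definition kDE a : ED b1 g := exist _ (mE g (mE b1 a)) (keepK_E a).

Definition kM : morph K (interm b1 g).
Proof.
refine (@Morph _ _ K (interm b1 g) (kD b1 gV) kDE _ _ _ _ _).
- by move=> e; apply/val_inj; rewrite /= !morph_src.
- by move=> e; apply/val_inj; rewrite /= !morph_tgt.
- by move=> e; rewrite /= /markD /= !morph_mark.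
- move=> a c E; rewrite /= /labD (exK_iff _ (erefl (mV g (mV b1 a)))) E /=.
  by apply: morph_lab; apply: morph_lab.
- move=> a c E; rewrite /= /rootD (exK_iff _ (erefl (mV g (mV b1 a)))) E /=.
  by apply: morph_root; apply: morph_root.
Defined.

Definition dM : morph (interm b1 g) G.
Proof.
refine (@Morph _ _ (interm b1 g) G val val _ _ _ _ _) => //.
- by move=> w c; rewrite /= /labD; case: ifP.
- by move=> w c; rewrite /= /rootD; case: ifP.
Defined.

Definition d'M : morph (interm b1 g) (result b1 b2 gV).
Proof.
refine (@Morph _ _ (interm b1 g) (result b1 b2 gV) inl inl _ _ _ _ _) => //.
- move=> w c /= E; case: pickP => // a /andP [Ea Na].
  by move: E; rewrite /labD; case: existsP => // -[]; exists a; rewrite Ea Na.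
- move=> w c /= E; case: pickP => // a /andP [Ea Na].
  by move: E; rewrite /rootD; case: existsP => // -[]; exists a; rewrite Ea Na.
Defined.

Definition hRE (y : gedge R) : EH b1 b2 g :=
  (if y \in codom (mE b2) as c return (y \in codom (mE b2) = c -> EH b1 b2 g)
   then fun Hc => inl (kDE (iinv Hc))
   else fun Hc => inr (exist _ y (negbT Hc))) (erefl _).

Lemma hRE_in a : hRE (mE b2 a) = inl (kDE a).
Proof.
rewrite /hRE; apply: (dif_spec (P := fun y => y = _)) => Hc.
- by congr inl; apply/val_inj; rewrite /= iinv_f.
- by exfalso; rewrite codom_f in Hc.
Qed.

Lemma hRE_out x (Hx : x \notin codom (mE b2)) :
  hRE x = inr (exist _ x Hx : ERn b2).
Proof.
rewrite /hRE; apply: (dif_spec (P := fun y => y = _)) => Hc.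
- by exfalso; rewrite Hc in Hx.
- by congr inr; apply/val_inj.
Qed.

Definition hM : morph R (result b1 b2 gV).
Proof.
refine (@Morph _ _ R (result b1 b2 gV) (hR b1 b2 gV) hRE _ _ _ _ _).
- move=> y; case: (boolP (y \in codom (mE b2))) => [/codomP [a ->]|Hy].
  + rewrite hRE_in -morph_src hR_in /=; congr inl; apply/val_inj.
    by rewrite /= !morph_src.
  + by rewrite (hRE_out Hy).
- move=> y; case: (boolP (y \in codom (mE b2))) => [/codomP [a ->]|Hy].
  + rewrite hRE_in -morph_tgt hR_in /=; congr inl; apply/val_inj.
    by rewrite /= !morph_tgt.
  + by rewrite (hRE_out Hy).
- move=> y; case: (boolP (y \in codom (mE b2))) => [/codomP [a ->]|Hy].
  + by rewrite hRE_in /= /markD /= !morph_mark.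
  + by rewrite (hRE_out Hy).
- move=> x c E; case: (boolP (x \in codom (mV b2))) => [/codomP [a Ea]|Hx].
  + rewrite Ea hR_in /= (pickK_iff _ (erefl (mV g (mV b1 a)))).
    case Na: (glab a) => [c'|] /=; last by rewrite -Ea.
    rewrite /labD (exK_iff _ (erefl (mV g (mV b1 a)))) Na /=.
    have := morph_lab b2 Na; rewrite -Ea E => -[->].
    by apply: morph_lab; apply: morph_lab.
  + by rewrite (hR_out Hx).
- move=> x c E; case: (boolP (x \in codom (mV b2))) => [/codomP [a Ea]|Hx].
  + rewrite Ea hR_in /= (pickK_iff _ (erefl (mV g (mV b1 a)))).
    case Na: (groot a) => [c'|] /=; last by rewrite -Ea.
    rewrite /rootD (exK_iff _ (erefl (mV g (mV b1 a)))) Na /=.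
    have := morph_root b2 Na; rewrite -Ea E => -[->].
    by apply: morph_root; apply: morph_root.
  + by rewrite (hR_out Hx).
Defined.

Lemma ndV w : (w \in codom (mV g)) = false -> ~~ delV b1 g w.
Proof.
move=> Hc; apply/existsP => -[x /andP [_ /eqP E]].
by rewrite -E codom_f in Hc.
Qed.

Lemma ndE e : (e \in codom (mE g)) = false -> keepE b1 g e.
Proof.
move=> Hc; rewrite /keepE /delE; apply/and3P; split.
- apply/existsP => -[x /andP [_ /eqP E]]; by rewrite -E codom_f in Hc.
- apply/existsP => -[x /andP [Hx /eqP E]].
  by have [/(_ (esym E))] := Hdang (negbT Hc) Hx.
- apply/existsP => -[x /andP [Hx /eqP E]].
  by have [_ /(_ (esym E))] := Hdang (negbT Hc) Hx.
Qed.

Lemma POL_c : is_pushout b1 kM g dM.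
Proof.
split; first by [].
move=> X x1 x2 [sqV sqE].
pose uV w := (if w \in codom (mV g) as c return (w \in codom (mV g) = c -> gnode X)
   then fun Hc => mV x1 (iinv Hc)
   else fun Hc => mV x2 (exist _ w (ndV Hc))) (erefl _).
pose uE e := (if e \in codom (mE g) as c return (e \in codom (mE g) = c -> gedge X)
   then fun Hc => mE x1 (iinv Hc)
   else fun Hc => mE x2 (exist _ e (ndE Hc))) (erefl _).
have uV_g : forall x, uV (mV g x) = mV x1 x.
  move=> x; rewrite /uV; apply: (dif_spec (P := fun y => y = _)) => Hc.
  - by rewrite iinv_f.
  - by exfalso; rewrite codom_f in Hc.
have uE_g : forall x, uE (mE g x) = mE x1 x.
  move=> x; rewrite /uE; apply: (dif_spec (P := fun y => y = _)) => Hc.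
  - by rewrite iinv_f.
  - by exfalso; rewrite codom_f in Hc.
have uV_k : forall w (p : ~~ delV b1 g w), uV w = mV x2 (exist _ w p).
  move=> w p; rewrite /uV; apply: (dif_spec (P := fun y => y = _)) => Hc.
  - have Ey := f_iinv Hc; set y := iinv Hc in Ey *.
    case: (boolP (y \in codom (mV b1))) => [/codomP [a Ea]|Hn].
    + rewrite Ea sqV; congr (mV x2 _); apply/val_inj; by rewrite /= -Ey Ea.
    + exfalso; move/negP: p; apply; apply/existsP; exists y; by rewrite Hn Ey eqxx.
  - by congr (mV x2 _); apply/val_inj.
have uE_k : forall e (p : keepE b1 g e), uE e = mE x2 (exist _ e p).
  move=> e p; rewrite /uE; apply: (dif_spec (P := fun y => y = _)) => Hc.
  - have Ey := f_iinv Hc; set y := iinv Hc in Ey *.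
    case: (boolP (y \in codom (mE b1))) => [/codomP [a Ea]|Hn].
    + rewrite Ea sqE; congr (mE x2 _); apply/val_inj; by rewrite /= -Ey Ea.
    + exfalso; case/and3P: p => p _ _; move/negP: p; apply; apply/existsP; exists y; by rewrite Hn Ey eqxx.
  - by congr (mE x2 _); apply/val_inj.
have Hsrc : forall e, uV (gsrc e) = gsrc (uE e).
  - move=> e; case Hc: (e \in codom (mE g)).
    + move/codomP: Hc => [y ->]; by rewrite uE_g -morph_src uV_g morph_src.
    + rewrite (uE_k _ (ndE Hc)) -morph_src (uV_k _ (keepE_src (ndE Hc))).
      by congr (mV x2 _); apply/val_inj.
have Htgt : forall e, uV (gtgt e) = gtgt (uE e).
  - move=> e; case Hc: (e \in codom (mE g)).
    + move/codomP: Hc => [y ->]; by rewrite uE_g -morph_tgt uV_g morph_tgt.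
    + rewrite (uE_k _ (ndE Hc)) -morph_tgt (uV_k _ (keepE_tgt (ndE Hc))).
      by congr (mV x2 _); apply/val_inj.
have Hmark : forall e, gmark (uE e) = gmark e.
  - move=> e; case Hc: (e \in codom (mE g)).
    + move/codomP: Hc => [y ->]; by rewrite uE_g !morph_mark.
    + by rewrite (uE_k _ (ndE Hc)) morph_mark.
have Hlab : forall w c, glab w = Some c -> glab (uV w) = Some c.
  - move=> w c E; case Hc: (w \in codom (mV g)).
    + move/codomP: Hc => [x Ex]; rewrite Ex uV_g; apply: morph_lab.
      case Lx: (glab x) (proj1 (TL x)) => [c'|] // _.
      by have := morph_lab g Lx; rewrite -Ex E => -[->].
    + rewrite (uV_k _ (ndV Hc)); apply: morph_lab.
      rewrite /= /labD exK_n //= => a Ea; by rewrite -Ea codom_f in Hc.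
have Hroot : forall w c, groot w = Some c -> groot (uV w) = Some c.
  - move=> w c E; case Hc: (w \in codom (mV g)).
    + move/codomP: Hc => [x Ex]; rewrite Ex uV_g; apply: morph_root.
      case Lx: (groot x) (proj2 (TL x)) => [c'|] // _.
      by have := morph_root g Lx; rewrite -Ex E => -[->].
    + rewrite (uV_k _ (ndV Hc)); apply: morph_root.
      rewrite /= /rootD exK_n //= => a Ea; by rewrite -Ea codom_f in Hc.
exists (@Morph _ _ G X uV uE Hsrc Htgt Hmark Hlab Hroot); split.
- split; split => /=.
  + exact: uV_g.
  + exact: uE_g.
  + by case=> w p; rewrite uV_k.
  + by case=> e p; rewrite uE_k.
- move=> u' [t1 t2] [t3 t4]; split => w /=.
  + case Hc: (w \in codom (mV g)).
    * by move/codomP: Hc => [x ->]; rewrite uV_g t1.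
    * by rewrite (uV_k _ (ndV Hc)) -(t3 (exist _ w (ndV Hc))).
  + case Hc: (w \in codom (mE g)).
    * by move/codomP: Hc => [x ->]; rewrite uE_g t2.
    * by rewrite (uE_k _ (ndE Hc)) -(t4 (exist _ w (ndE Hc))).
Qed.
Lemma PBL_c : is_pullback b1 kM g dM.
Proof.
split; first by [].
move=> X y1 y2 [sqV sqE].
have inV : forall z, mV y1 z \in codom (mV b1).
  move=> z; apply/negPn/negP => Hn; move: (valP (mV y2 z)) => /negP; apply.
  by apply/existsP; exists (mV y1 z); rewrite Hn sqV eqxx.
have inE : forall z, mE y1 z \in codom (mE b1).
  move=> z; apply/negPn/negP => Hn; move: (valP (mE y2 z)); case/and3P => /negP H0 _ _.
  by apply: H0; apply/existsP; exists (mE y1 z); rewrite Hn sqE eqxx.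
pose pV z := iinv (inV z).
pose pE z := iinv (inE z).
have pVK : forall z, mV b1 (pV z) = mV y1 z by move=> z; exact: f_iinv.
have pEK : forall z, mE b1 (pE z) = mE y1 z by move=> z; exact: f_iinv.
have Hsrc : forall e, pV (gsrc e) = gsrc (pE e).
  by move=> e; apply: b1V; rewrite pVK morph_src -pEK morph_src.
have Htgt : forall e, pV (gtgt e) = gtgt (pE e).
  by move=> e; apply: b1V; rewrite pVK morph_tgt -pEK morph_tgt.
have Hmark : forall e, gmark (pE e) = gmark e.
  by move=> e; rewrite -(morph_mark b1) pEK morph_mark.
have Hlab : forall z c, glab z = Some c -> glab (pV z) = Some c.
  move=> z c E; have L2 := morph_lab y2 E; have L1 := morph_lab y1 E.
  have Ew : mV g (mV b1 (pV z)) = val (mV y2 z) by rewrite pVK sqV.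
  move: L2; rewrite /= /labD (exK_iff _ Ew).
  case Ka: (glab (pV z)) => [c'|] //= _.
  by have := morph_lab b1 Ka; rewrite pVK L1 => -[->].
have Hroot : forall z c, groot z = Some c -> groot (pV z) = Some c.
  move=> z c E; have L2 := morph_root y2 E; have L1 := morph_root y1 E.
  have Ew : mV g (mV b1 (pV z)) = val (mV y2 z) by rewrite pVK sqV.
  move: L2; rewrite /= /rootD (exK_iff _ Ew).
  case Ka: (groot (pV z)) => [c'|] //= _.
  by have := morph_root b1 Ka; rewrite pVK L1 => -[->].
exists (@Morph _ _ X K pV pE Hsrc Htgt Hmark Hlab Hroot); split.
- split; split => z /=; rewrite ?pVK ?pEK //; apply/val_inj => /=.
  + by rewrite pVK sqV.
  + by rewrite pEK sqE.
- move=> u' [t1 t2] _; split => z /=.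
  + by apply: b1V; rewrite pVK t1.
  + by apply: b1E; rewrite pEK t2.
Qed.

Lemma POR_c : is_pushout b2 kM hM d'M.
Proof.
split.
  by split => a /=; rewrite ?hR_in ?hRE_in.
move=> X x1 x2 [sqV sqE].
pose uV (s : VH b1 b2 g) := match s with inl w => mV x2 w | inr x => mV x1 (val x) end.
pose uE (s : EH b1 b2 g) := match s with inl w => mE x2 w | inr x => mE x1 (val x) end.
have uV_h : forall x, uV (hR b1 b2 gV x) = mV x1 x.
  move=> x; case: (boolP (x \in codom (mV b2))) => [/codomP [a ->]|Hx].
  - by rewrite hR_in /= sqV.
  - by rewrite (hR_out Hx).
have uE_h : forall x, uE (hRE x) = mE x1 x.
  move=> x; case: (boolP (x \in codom (mE b2))) => [/codomP [a ->]|Hx].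
  - by rewrite hRE_in /= sqE.
  - by rewrite (hRE_out Hx).
have Hsrc : forall e : gedge (result b1 b2 gV), uV (gsrc e) = gsrc (uE e).
  by case=> [e|y] /=; rewrite ?uV_h morph_src.
have Htgt : forall e : gedge (result b1 b2 gV), uV (gtgt e) = gtgt (uE e).
  by case=> [e|y] /=; rewrite ?uV_h morph_tgt.
have Hmark : forall e : gedge (result b1 b2 gV), gmark (uE e) = gmark e.
  by case=> [e|y] /=; rewrite morph_mark.
have Hlab : forall (s : gnode (result b1 b2 gV)) c, glab s = Some c -> glab (uV s) = Some c.
  case=> [w|x] c /=; last exact: morph_lab.
  case: pickP => [a /andP [/eqP Ea Na] E|_ E]; last exact: morph_lab.
  have -> : w = kD b1 gV a by apply/val_inj.
  rewrite -sqV; exact: morph_lab.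
have Hroot : forall (s : gnode (result b1 b2 gV)) c, groot s = Some c -> groot (uV s) = Some c.
  case=> [w|x] c /=; last exact: morph_root.
  case: pickP => [a /andP [/eqP Ea Na] E|_ E]; last exact: morph_root.
  have -> : w = kD b1 gV a by apply/val_inj.
  rewrite -sqV; exact: morph_root.
exists (@Morph _ _ (result b1 b2 gV) X uV uE Hsrc Htgt Hmark Hlab Hroot); split.
- by split; split => z /=; rewrite ?uV_h ?uE_h.
- move=> u' [t1 t2] [t3 t4]; split => -[w|x] /=.
  + by rewrite -t3.
  + have E : hR b1 b2 gV (val x) = inr x.
      by rewrite (hR_out (valP x)); congr inr; apply/val_inj.
    by rewrite -E; exact: (esym (t1 _)).
  + by rewrite -t4.
  + have E : hRE (val x) = inr x.
      by rewrite (hRE_out (valP x)); congr inr; apply/val_inj.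
    by rewrite -E; exact: (esym (t2 _)).
Qed.

Lemma PBR_c : is_pullback b2 kM hM d'M.
Proof.
split; first exact: (proj1 POR_c).
move=> X y1 y2 [sqV sqE].
have inV : forall z, mV y1 z \in codom (mV b2).
  move=> z; apply/negPn/negP => Hn; have := sqV z; by rewrite /= (hR_out Hn).
have inE : forall z, mE y1 z \in codom (mE b2).
  move=> z; apply/negPn/negP => Hn; have := sqE z; by rewrite /= (hRE_out Hn).
pose pV z := iinv (inV z).
pose pE z := iinv (inE z).
have pVK : forall z, mV b2 (pV z) = mV y1 z by move=> z; exact: f_iinv.
have pEK : forall z, mE b2 (pE z) = mE y1 z by move=> z; exact: f_iinv.
have kVK : forall z, kD b1 gV (pV z) = mV y2 z.
  by move=> z; have := sqV z; rewrite /= -pVK hR_in => -[].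
have kEK : forall z, kDE (pE z) = mE y2 z.
  by move=> z; have := sqE z; rewrite /= -pEK hRE_in => -[].
have Hsrc : forall e, pV (gsrc e) = gsrc (pE e).
  by move=> e; apply: b2V; rewrite pVK morph_src -pEK morph_src.
have Htgt : forall e, pV (gtgt e) = gtgt (pE e).
  by move=> e; apply: b2V; rewrite pVK morph_tgt -pEK morph_tgt.
have Hmark : forall e, gmark (pE e) = gmark e.
  by move=> e; rewrite -(morph_mark b2) pEK morph_mark.
have Hlab : forall z c, glab z = Some c -> glab (pV z) = Some c.
  move=> z c E; have L2 := morph_lab y2 E; have L1 := morph_lab y1 E.
  move: L2; rewrite -kVK /= /labD (exK_iff _ (erefl (mV g (mV b1 (pV z))))).
  case Ka: (glab (pV z)) => [c'|] //= _.
  by have := morph_lab b2 Ka; rewrite pVK L1 => -[->].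
have Hroot : forall z c, groot z = Some c -> groot (pV z) = Some c.
  move=> z c E; have L2 := morph_root y2 E; have L1 := morph_root y1 E.
  move: L2; rewrite -kVK /= /rootD (exK_iff _ (erefl (mV g (mV b1 (pV z))))).
  case Ka: (groot (pV z)) => [c'|] //= _.
  by have := morph_root b2 Ka; rewrite pVK L1 => -[->].
exists (@Morph _ _ X K pV pE Hsrc Htgt Hmark Hlab Hroot); split.
- by split; split => z /=; rewrite ?pVK ?pEK ?kVK ?kEK.
- move=> u' [t1 t2] _; split => z /=.
  + by apply: b2V; rewrite pVK t1.
  + by apply: b2E; rewrite pEK t2.
Qed.

Lemma constr_dpo : natural_dpo b1 b2 g kM dM hM d'M.
Proof. split; split; [exact: POL_c|exact: PBL_c|exact: POR_c|exact: PBR_c]. Qed.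

End Constr.
Lemma TLRG_result : TLRG G <-> TLRG (result b1 b2 gV).
Proof.
split => [TG|TH].
- case=> [w|x] /=; last exact: TR.
  split.
  + case: pickP => [a _|N]; first exact: (proj1 (TR _)).
    rewrite /labD; case: existsP => [[a /andP [Ea Na]]|_]; last exact: (proj1 (TG _)).
    by have := N a; rewrite Ea Na.
  + case: pickP => [a _|N]; first exact: (proj2 (TR _)).
    rewrite /rootD; case: existsP => [[a /andP [Ea Na]]|_]; last exact: (proj2 (TG _)).
    by have := N a; rewrite Ea Na.
- move=> w; case Hc: (w \in codom (mV g)).
  + move/codomP: Hc => [x ->]; have [l r] := TL x; split.
    * by case E: (glab x) l => [c|] // _; rewrite (morph_lab g E).
    * by case E: (groot x) r => [c|] // _; rewrite (morph_root g E).
  + have Hn : forall a, mV g (mV b1 a) <> w by move=> a Ea; rewrite -Ea codom_f in Hc.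
    have [l r] := TH (inl (exist _ w (ndV Hc))).
    move: l r; rewrite /= !pickK_n // /labD /rootD !exK_n //.
Qed.


End Main.

Theorem theorem3p1 (LV LE : finType) (K L R : graph LV LE)
  (b1 : morph K L) (b2 : morph K R) (Hrule : is_rule b1 b2)
  (G : graph LV LE) (g : morph L G) (ginj : inj_morph g) :
  (* natural DPO exists iff dangling condition *)
  ((exists (D H : graph LV LE) (k : morph K D) (d : morph D G)
           (h : morph R H) (d' : morph D H),
      natural_dpo b1 b2 g k d h d') <-> dangling b1 g)
  /\
  (* uniqueness of D and H up to isomorphism *)
  (dangling b1 g ->
   forall (D H : graph LV LE) (k : morph K D) (d : morph D G)
          (h : morph R H) (d' : morph D H)
          (D2 H2 : graph LV LE) (k2 : morph K D2) (e2 : morph D2 G)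
          (h2 : morph R H2) (e2' : morph D2 H2),
     natural_dpo b1 b2 g k d h d' -> natural_dpo b1 b2 g k2 e2 h2 e2' ->
     iso D D2 /\ iso H H2)
  /\
  (* for a TLRG G they agree with the rule application construction *)
  (dangling b1 g -> TLRG G ->
   forall (D H : graph LV LE) (k : morph K D) (d : morph D G)
          (h : morph R H) (d' : morph D H),
     natural_dpo b1 b2 g k d h d' ->
     iso D (interm b1 g) /\ iso H (result b1 b2 (proj1 ginj)))
  /\
  (* G => H : G is a TLRG iff H is *)
  (forall (D H : graph LV LE) (k : morph K D) (d : morph D G)
          (h : morph R H) (d' : morph D H),
     natural_dpo b1 b2 g k d h d' -> (TLRG G <-> TLRG H)).
Proof.
have [TL [TR [[b1V b1E] [b2V b2E]]]] := Hrule.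
pose gV := proj1 ginj; pose gE := proj2 ginj.
split; [split|split; [|split]].
- by case=> D [H [k [d [h [d' ND]]]]]; exact: (ND_dangling b1V b1E ND).
- move=> Hd; do 6 eexists; exact: (constr_dpo TL b1V b1E b2V b2E gV gE Hd).
- move=> _ D H k d h d' D2 H2 k2 e2 h2 e2' N1 N2; split.
  + apply: iso_trans (iso_sym (iso_D TL b1V b1E gV N1)) (iso_D TL b1V b1E gV N2).
  + apply: iso_trans (iso_sym (iso_H TL TR b1V b1E b2V b2E gV gE N1))
      (iso_H TL TR b1V b1E b2V b2E gV gE N2).
- move=> _ _ D H k d h d' ND; split.
  + exact: (iso_sym (iso_D TL b1V b1E gV ND)).
  + exact: (iso_sym (iso_H TL TR b1V b1E b2V b2E gV gE ND)).
- move=> D H k d h d' ND.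
  have [T1 T2] := TLRG_result b1 b2 TL TR gV.
  have I := iso_H TL TR b1V b1E b2V b2E gV gE ND.
  split => T; [exact: iso_TLRG I (T1 T)|exact: T2 (iso_TLRG (iso_sym I) T)].
Qed.
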